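(* Let $X \subset Y \subset \mathbb{R}^{n}$ be finite sets, let $r>0$, and suppose that $X$ is $r$-dense in $Y$. Let $0 = s_{0} < s_{1} < \dots < s_{m}$ be the phase-change numbers of $Y$, and let $0 \le i < m$ be such that $2r < s_{i+1} - s_{i}$. Then the inclusion $i: V_{s_{i}}(X) \to V_{s_{i}}(Y)$ is a weak homotopy equivalence (its geometric realization is a homotopy equivalence).
   Context: $\mathbb{R}^n$ carries the Euclidean metric $d$. For subsets $A \subset B$ of a metric space and $r>0$, $A$ is $r$-dense in $B$ if for every $b \in B$ there is an $a \in A$ with $d(a,b) < r$. For a finite set $X \subset \mathbb{R}^n$ and $s \geq 0$, $V_{s}(X)$ denotes the Vietoris–Rips complex: the simplicial complex with vertex set $X$ whose simplices are the nonempty subsets $\{x_{0}, \dots, x_{p}\}$ of $X$ with $d(x_{i},x_{j}) \leq s$ for all $i,j$. For $X \subset Y$, $i: V_{s}(X) \to V_{s}(Y)$ denotes the induced inclusion. The phase-change numbers of a finite set $Y$ are the distinct values of $d(y,y')$ for $y,y' \in Y$, listed in increasing order $0 = s_{0} < s_{1} < \dots < s_{m}$. *)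

(* Defs.v *)
From Stdlib Require Import Reals List.
Import ListNotations.
Open Scope R_scope.

(** Points of R^n are lists of reals of length n. *)
Definition point := list R.

Fixpoint sqdist (x y : point) : R :=
  match x, y with
  | a :: x', b :: y' => (a - b) ^ 2 + sqdist x' y'
  | _, _ => 0
  end.

Definition dist (x y : point) : R := sqrt (sqdist x y).

Definition r_dense (r : R) (A B : list point) : Prop :=
  forall b, In b B -> exists a, In a A /\ dist a b < r.

(** [s] is a phase-change number of [Y] (a distance value between points of Y). *)
Definition phase_value (Y : list point) (s : R) : Prop :=
  exists y y', In y Y /\ In y' Y /\ dist y y' = s.

(** [s] and [s'] are consecutive phase-change numbers of [Y]: s = s_i, s' = s_{i+1}. *)
Definition consecutive_phase (Y : list point) (s s' : R) : Prop :=
  phase_value Y s /\ phase_value Y s' /\ s < s' /\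
  forall t, phase_value Y t -> ~ (s < t /\ t < s').

Fixpoint sumN (a : nat -> R) (N : nat) : R :=
  match N with
  | O => 0
  | S k => sumN a k + a k
  end.

(** Geometric realization of the Vietoris-Rips complex V_s(X), for X a subset
    of the vertex list Y (duplicate-free), embedded via barycentric coordinates
    in R^{length Y}: coordinate j corresponds to the point nth j Y.
    A point is a convex combination of the vertices of a simplex of V_s(X). *)
Definition VR_real (Y : list point) (X : point -> Prop) (s : R) (a : nat -> R) : Prop :=
  (forall j, (length Y <= j)%nat -> a j = 0) /\
  (forall j, 0 <= a j) /\
  sumN a (length Y) = 1 /\
  (forall j, (j < length Y)%nat -> a j <> 0 -> X (nth j Y [])) /\
  (forall j k, (j < length Y)%nat -> (k < length Y)%nat -> a j <> 0 -> a k <> 0 ->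
     dist (nth j Y []) (nth k Y []) <= s).

Fixpoint dmax (N : nat) (a b : nat -> R) : R :=
  match N with
  | O => 0
  | S k => Rmax (dmax k a b) (Rabs (a k - b k))
  end.

Definition cont_map (N : nat) (A B : (nat -> R) -> Prop) (f : (nat -> R) -> (nat -> R)) : Prop :=
  (forall a, A a -> B (f a)) /\
  forall a, A a -> forall eps, 0 < eps -> exists delta, 0 < delta /\
    forall b, A b -> dmax N b a < delta -> dmax N (f b) (f a) < eps.

Definition homotopic (N : nat) (A B : (nat -> R) -> Prop)
    (f g : (nat -> R) -> (nat -> R)) : Prop :=
  exists H : R -> (nat -> R) -> (nat -> R),
    (forall t a, 0 <= t <= 1 -> A a -> B (H t a)) /\
    (forall t a, 0 <= t <= 1 -> A a -> forall eps, 0 < eps -> exists delta, 0 < delta /\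
       forall t' b, 0 <= t' <= 1 -> A b -> Rabs (t' - t) < delta -> dmax N b a < delta ->
         dmax N (H t' b) (H t a) < eps) /\
    (forall a, A a -> forall j, H 0 a j = f a j) /\
    (forall a, A a -> forall j, H 1 a j = g a j).

Definition inclusion_homotopy_equiv (N : nat) (A B : (nat -> R) -> Prop) : Prop :=
  (forall a, A a -> B a) /\
  exists g, cont_map N B A g /\
    homotopic N A A (fun a => g a) (fun a => a) /\
    homotopic N B B (fun a => g a) (fun a => a).

(* Main.v *)
From Pilot Require Import Defs.
From Stdlib Require Import Reals List Lia Lra Psatz.
Import ListNotations.
Import Pilot.Defs.
Open Scope R_scope.

Lemma sumN_ext f g N : (forall j, (j < N)%nat -> f j = g j) -> sumN f N = sumN g N.
Proof. induction N; simpl; intros H; auto. rewrite IHN by (intros; apply H; lia). rewrite H by lia. auto. Qed.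

Lemma sumN_plus f g h N : (forall j, h j = f j + g j) -> sumN h N = sumN f N + sumN g N.
Proof. intros H; induction N; simpl; [lra|]. rewrite IHN, H; lra. Qed.

Lemma sumN_minus f g h N : (forall j, h j = f j - g j) -> sumN h N = sumN f N - sumN g N.
Proof. intros H; induction N; simpl; [lra|]. rewrite IHN, H; lra. Qed.

Lemma sumN_scal c f h N : (forall j, h j = c * f j) -> sumN h N = c * sumN f N.
Proof. intros H; induction N; simpl; [lra|]. rewrite IHN, H; lra. Qed.

Lemma sumN_zero f N : (forall j, (j < N)%nat -> f j = 0) -> sumN f N = 0.
Proof. induction N; simpl; intros H; auto. rewrite IHN by (intros; apply H; lia). rewrite H by lia. lra. Qed.

Lemma sumN_nonneg f N : (forall j, 0 <= f j) -> 0 <= sumN f N.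
Proof. intros H; induction N; simpl; [lra|]. specialize (H N); lra. Qed.

Lemma sumN_nonzero f N : sumN f N <> 0 -> exists j, (j < N)%nat /\ f j <> 0.
Proof. induction N; simpl; intros H; [lra|].
  destruct (Req_dec (f N) 0) as [E|E].
  - destruct IHN as [j [? ?]]. rewrite E in H; lra. exists j; split; auto; lia.
  - exists N; split; auto; lia. Qed.

Lemma sumN_abs f N : Rabs (sumN f N) <= sumN (fun j => Rabs (f j)) N.
Proof. induction N; simpl. rewrite Rabs_R0; lra.
  eapply Rle_trans. apply Rabs_triang. lra. Qed.

Lemma sumN_le_const f c N : (forall j, (j < N)%nat -> f j <= c) -> sumN f N <= INR N * c.
Proof. induction N; cbn [sumN]; intros H. simpl; lra.
  rewrite S_INR. assert (sumN f N <= INR N * c) by (apply IHN; intros; apply H; lia).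
  specialize (H N ltac:(lia)). lra. Qed.

Lemma sumN_swap (F : nat -> nat -> R) N M :
  sumN (fun k => sumN (fun j => F j k) M) N = sumN (fun j => sumN (fun k => F j k) N) M.
Proof. induction M; simpl.
  - apply sumN_zero; auto.
  - rewrite <- IHM. apply sumN_plus. intros; reflexivity. Qed.

Lemma sumN_ind m c N : (m < N)%nat ->
  sumN (fun k => if Nat.eq_dec m k then c else 0) N = c.
Proof. induction N; simpl; intros H. lia.
  destruct (Nat.eq_dec m N).
  - subst. rewrite sumN_zero. lra. intros j Hj. destruct (Nat.eq_dec N j); [lia|auto].
  - rewrite IHN by lia. lra. Qed.

Lemma dmax_nonneg N a b : 0 <= dmax N a b.
Proof. induction N; simpl. lra. eapply Rle_trans; [exact IHN| apply Rmax_l]. Qed.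

Lemma dmax_ge N a b j : (j < N)%nat -> Rabs (a j - b j) <= dmax N a b.
Proof. induction N; simpl; intros H. lia.
  destruct (Nat.eq_dec j N). subst; apply Rmax_r.
  eapply Rle_trans; [apply IHN; lia| apply Rmax_l]. Qed.

Lemma dmax_le N a b c : 0 <= c -> (forall j, (j < N)%nat -> Rabs (a j - b j) <= c) -> dmax N a b <= c.
Proof. intros Hc; induction N; simpl; intros H. lra.
  apply Rmax_lub. apply IHN; intros; apply H; lia. apply H; lia. Qed.

Lemma sqdist_nonneg x y : 0 <= sqdist x y.
Proof. revert y; induction x; destruct y; simpl; try lra. specialize (IHx y). pose proof (pow2_ge_0 (a - r)). lra. Qed.

Lemma sqdist_sym x y : sqdist x y = sqdist y x.
Proof. revert y; induction x; destruct y; simpl; auto. rewrite IHx. ring. Qed.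

Lemma dist_sym x y : dist x y = dist y x.
Proof. unfold dist; rewrite sqdist_sym; auto. Qed.

Lemma dist_self x : dist x x = 0.
Proof. unfold dist. replace (sqdist x x) with 0. apply sqrt_0.
  induction x; simpl; auto. rewrite <- IHx; ring. Qed.

Lemma dist_nonneg x y : 0 <= dist x y.
Proof. apply sqrt_pos. Qed.

Lemma mink2 u v U V : 0 <= U -> 0 <= V ->
  sqrt ((u+v)^2 + (U+V)^2) <= sqrt (u^2 + U^2) + sqrt (v^2 + V^2).
Proof. intros HU HV.
  set (p := sqrt (u^2+U^2)). set (q := sqrt (v^2+V^2)).
  assert (Hp : p * p = u^2+U^2) by (apply sqrt_sqrt; pose proof (pow2_ge_0 u); pose proof (pow2_ge_0 v); pose proof (pow2_ge_0 U); pose proof (pow2_ge_0 V); lra).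
  assert (Hq : q * q = v^2+V^2) by (apply sqrt_sqrt; pose proof (pow2_ge_0 u); pose proof (pow2_ge_0 v); pose proof (pow2_ge_0 U); pose proof (pow2_ge_0 V); lra).
  assert (p0 : 0 <= p) by apply sqrt_pos. assert (q0 : 0 <= q) by apply sqrt_pos.
  assert (Hpq : u*v + U*V <= p*q).
  { assert ((p*q)*(p*q) >= (u*v+U*V)*(u*v+U*V)).
    { replace ((p*q)*(p*q)) with ((p*p)*(q*q)) by ring. rewrite Hp, Hq.
      pose proof (pow2_ge_0 (u*V - v*U)).
      replace ((u ^ 2 + U ^ 2) * (v ^ 2 + V ^ 2)) with ((u*v+U*V)*(u*v+U*V) + (u*V - v*U)^2) by ring. lra. }
    assert (0 <= p*q) by nra. nra. }
  rewrite <- (sqrt_square (p+q)) by lra. apply sqrt_le_1_alt.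
  replace ((p+q)*(p+q)) with (p*p + q*q + 2*(p*q)) by ring. rewrite Hp, Hq.
  replace ((u + v) ^ 2 + (U + V) ^ 2) with (u^2+U^2+v^2+V^2 + 2*(u*v+U*V)) by ring. lra. Qed.

Lemma dist_tri x y z : length x = length y -> length y = length z ->
  dist x z <= dist x y + dist y z.
Proof. revert y z; induction x; destruct y, z; simpl; intros H1 H2; try discriminate.
  - unfold dist; simpl; rewrite sqrt_0; lra.
  - injection H1; injection H2; intros E2 E1.
    specialize (IHx y z E1 E2). unfold dist in *; simpl.
    set (A := sqdist x y) in *. set (B := sqdist y z) in *. set (C := sqdist x z) in *.
    assert (HA: 0 <= A) by apply sqdist_nonneg. assert (HB: 0 <= B) by apply sqdist_nonneg.
    assert (HC: 0 <= C) by apply sqdist_nonneg.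
    replace A with (sqrt A ^ 2) by (simpl; rewrite Rmult_1_r, sqrt_sqrt; auto).
    replace B with (sqrt B ^ 2) by (simpl; rewrite Rmult_1_r, sqrt_sqrt; auto).
    replace (a - r0) with ((a - r) + (r - r0)) by ring.
    eapply Rle_trans; [| apply mink2; apply sqrt_pos].
    apply sqrt_le_1_alt.
    assert (C <= (sqrt A + sqrt B)^2).
    { rewrite <- (sqrt_sqrt C) by auto. assert (0 <= sqrt C) by apply sqrt_pos. nra. }
    lra.
Qed.

Section Retract.
Variable Y : list point.
Variable n : nat.
Variables s s' r : R.
Variable phi : nat -> nat.
Hypothesis HlenY : Forall (fun p => length p = n) Y.
Hypothesis Hphi : forall j, (j < length Y)%nat ->
  (phi j < length Y)%nat /\ dist (nth j Y []) (nth (phi j) Y []) < r.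
Hypothesis Hgap : forall j k, (j < length Y)%nat -> (k < length Y)%nat ->
  dist (nth j Y []) (nth k Y []) < s' -> dist (nth j Y []) (nth k Y []) <= s.
Hypothesis Hr : 2 * r < s' - s.

Definition gmap (a : nat -> R) k :=
  sumN (fun j => if Nat.eq_dec (phi j) k then a j else 0) (length Y).
Definition Hmap t a k := (1 - t) * gmap a k + t * a k.

Lemma g_nonneg a : (forall j, 0 <= a j) -> forall k, 0 <= gmap a k.
Proof. intros H k; apply sumN_nonneg; intros j; destruct Nat.eq_dec; auto; lra. Qed.

Lemma g_out a k : (length Y <= k)%nat -> gmap a k = 0.
Proof. intros H; apply sumN_zero; intros j Hj. destruct (Hphi j Hj).
  destruct Nat.eq_dec; [lia|auto]. Qed.

Lemma g_sum a : sumN (gmap a) (length Y) = sumN a (length Y).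
Proof. unfold gmap. rewrite (sumN_swap (fun j k => if Nat.eq_dec (phi j) k then a j else 0)).
  apply sumN_ext. intros j Hj. apply sumN_ind. apply Hphi; auto. Qed.

Lemma g_supp a k : gmap a k <> 0 -> exists j, (j < length Y)%nat /\ phi j = k /\ a j <> 0.
Proof. intros H. destruct (sumN_nonzero _ _ H) as [j [Hj Hn]].
  destruct Nat.eq_dec; [|lra]. exists j; auto. Qed.

Lemma g_lip a b k : Rabs (gmap b k - gmap a k) <= INR (length Y) * dmax (length Y) b a.
Proof. unfold gmap.
  rewrite <- (sumN_minus _ _ (fun j => (if Nat.eq_dec (phi j) k then b j else 0) - (if Nat.eq_dec (phi j) k then a j else 0))) by reflexivity.
  eapply Rle_trans; [apply sumN_abs|]. apply sumN_le_const. intros j Hj.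
  destruct Nat.eq_dec. apply dmax_ge; auto.
  replace (0 - 0) with 0 by ring. rewrite Rabs_R0. apply dmax_nonneg. Qed.

Lemma H_supp t a k : Hmap t a k <> 0 -> (t <> 0 /\ a k <> 0) \/ gmap a k <> 0.
Proof. unfold Hmap; intros H. destruct (Req_dec (gmap a k) 0) as [E|E]; [left|right; auto].
  rewrite E in H. split; intro F; apply H; rewrite F; ring. Qed.

Lemma nthlen j : (j < length Y)%nat -> length (nth j Y []) = n.
Proof. intros; apply (proj1 (Forall_nth _ _) HlenY); auto. Qed.

Lemma near_dist i x : (i < length Y)%nat -> (x = i \/ x = phi i) ->
  (x < length Y)%nat /\ dist (nth x Y []) (nth i Y []) < r.
Proof. intros Hi [E|E]; subst.
  - split; auto. rewrite dist_self. destruct (Hphi i Hi). pose proof (dist_nonneg (nth i Y []) (nth (phi i) Y [])). lra.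
  - destruct (Hphi i Hi); split; auto. rewrite dist_sym; auto. Qed.

Lemma simplex_dist i1 i2 x1 x2 : (i1 < length Y)%nat -> (i2 < length Y)%nat ->
  dist (nth i1 Y []) (nth i2 Y []) <= s ->
  (x1 = i1 \/ x1 = phi i1) -> (x2 = i2 \/ x2 = phi i2) ->
  dist (nth x1 Y []) (nth x2 Y []) <= s.
Proof. intros H1 H2 Hd E1 E2.
  destruct (near_dist _ _ H1 E1) as [L1 D1]. destruct (near_dist _ _ H2 E2) as [L2 D2].
  apply Hgap; auto.
  pose proof (dist_tri (nth x1 Y []) (nth i1 Y []) (nth x2 Y [])) as T1.
  pose proof (dist_tri (nth i1 Y []) (nth i2 Y []) (nth x2 Y [])) as T2.
  rewrite !nthlen in T1, T2 by auto. specialize (T1 eq_refl eq_refl). specialize (T2 eq_refl eq_refl).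
  rewrite (dist_sym (nth i2 Y [])) in T2. lra. Qed.

Lemma H_in (P : point -> Prop) t a : 0 <= t <= 1 ->
  VR_real Y (fun p => In p Y) s a ->
  (t <> 0 -> forall j, (j < length Y)%nat -> a j <> 0 -> P (nth j Y [])) ->
  (forall j, (j < length Y)%nat -> P (nth (phi j) Y [])) ->
  VR_real Y P s (Hmap t a).
Proof. intros Ht [Ha0 [Hnn [Hsum [HP Hd]]]] HPa HPphi.
  assert (Sup : forall k, (k < length Y)%nat -> Hmap t a k <> 0 ->
    exists i, (i < length Y)%nat /\ a i <> 0 /\ (k = i \/ k = phi i) /\ (t <> 0 /\ k = i \/ k = phi i)).
  { intros k Hk H. destruct (H_supp _ _ _ H) as [[? ?]|G].
    - exists k; split; [auto|split; [auto|split; [left; auto| left; auto]]].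
    - destruct (g_supp _ _ G) as [j [? [? ?]]]. exists j; subst; split; [auto|split; [auto|split; right; auto]]. }
  unfold VR_real; repeat split.
  - intros j Hj. unfold Hmap. rewrite (g_out a j Hj), (Ha0 j Hj). ring.
  - intros j. unfold Hmap. pose proof (g_nonneg a Hnn j). pose proof (Hnn j).
    apply Rplus_le_le_0_compat; apply Rmult_le_pos; lra.
  - rewrite (sumN_plus (fun k => (1 - t) * gmap a k) (fun k => t * a k)) by reflexivity.
    rewrite (sumN_scal (1 - t) (gmap a) (fun k => (1 - t) * gmap a k)) by reflexivity.
    rewrite (sumN_scal t a (fun k => t * a k)) by reflexivity. rewrite g_sum, Hsum. ring.
  - intros j Hj H. destruct (Sup j Hj H) as [i [Hi [Ai [_ [[T E]|E]]]]]; subst.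
    + apply HPa; auto.
    + apply HPphi; auto.
  - intros j k Hj Hk H1 H2.
    destruct (Sup j Hj H1) as [i1 [Hi1 [A1 [E1 _]]]].
    destruct (Sup k Hk H2) as [i2 [Hi2 [A2 [E2 _]]]].
    apply (simplex_dist i1 i2); auto.
Qed.

Lemma VR_ext P a b : VR_real Y P s a -> (forall j, a j = b j) -> VR_real Y P s b.
Proof. intros [H1 [H2 [H3 [H4 H5]]]] E. unfold VR_real. repeat split.
  - intros; rewrite <- E; auto.
  - intros; rewrite <- E; auto.
  - rewrite <- H3. apply sumN_ext; intros; rewrite E; auto.
  - intros j Hj; rewrite <- E; auto.
  - intros j k Hj Hk; rewrite <- !E; auto. Qed.

Lemma g_cont (Dom Cod : (nat -> R) -> Prop) :
  (forall a, Dom a -> Cod (gmap a)) -> cont_map (length Y) Dom Cod gmap.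
Proof. intros Hm; split; auto. intros a _ eps He.
  set (N := INR (length Y)). assert (0 <= N) by apply pos_INR.
  exists (eps / (N + 1)). split. apply Rdiv_lt_0_compat; lra.
  intros b _ Hb. set (d := eps / (N+1)) in *.
  assert (Hd : d * (N + 1) = eps) by (unfold d; field; lra).
  eapply Rle_lt_trans. apply (dmax_le _ _ _ (N * dmax (length Y) b a)).
  pose proof (dmax_nonneg (length Y) b a); nra.
  intros; apply g_lip.
  assert (N * dmax (length Y) b a <= N * d) by (apply Rmult_le_compat_l; lra).
  assert (0 < d) by (unfold d; apply Rdiv_lt_0_compat; lra). nra. Qed.

Lemma H_homotopic (Dom : (nat -> R) -> Prop) :
  (forall t a, 0 <= t <= 1 -> Dom a -> Dom (Hmap t a)) ->
  homotopic (length Y) Dom Dom (fun a => gmap a) (fun a => a).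
Proof. intros Hm. exists Hmap. split; [auto|]. split.
  2: split; intros; unfold Hmap; ring.
  intros t a Ht _ eps He.
  set (N := INR (length Y)). assert (0 <= N) by apply pos_INR.
  set (M := dmax (length Y) a (gmap a) + 1).
  assert (HM : M = dmax (length Y) a (gmap a) + 1) by reflexivity.
  assert (1 <= M) by (unfold M; pose proof (dmax_nonneg (length Y) a (gmap a)); lra).
  exists (eps / (N + 2 + M)). split. apply Rdiv_lt_0_compat; lra.
  set (d := eps / (N + 2 + M)).
  assert (Hd : d * (N + 2 + M) = eps) by (unfold d; field; lra).
  assert (0 < d) by (unfold d; apply Rdiv_lt_0_compat; lra).
  intros t' b Ht' _ Htt Hb.
  apply Rle_lt_trans with (N * d + d + d * M); [|nra].
  apply dmax_le. nra. intros k Hk.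
  assert (E : Hmap t' b k - Hmap t a k = (1 - t') * (gmap b k - gmap a k) + t' * (b k - a k)
     + (t' - t) * (a k - gmap a k)) by (unfold Hmap; ring).
  rewrite E.
  pose proof (g_lip a b k) as L1. fold N in L1.
  pose proof (dmax_ge (length Y) b a k Hk) as L2.
  pose proof (dmax_ge (length Y) a (gmap a) k Hk) as L3.
  pose proof (dmax_nonneg (length Y) b a).
  eapply Rle_trans. apply Rabs_triang.
  eapply Rle_trans. apply Rplus_le_compat_r. apply Rabs_triang.
  rewrite !Rabs_mult. rewrite (Rabs_pos_eq (1 - t')) by lra. rewrite (Rabs_pos_eq t') by lra.
  assert (A1 : (1 - t') * Rabs (gmap b k - gmap a k) <= N * d).
  { apply Rle_trans with (1 * (N * dmax (length Y) b a)).
    apply Rmult_le_compat; try lra; apply Rabs_pos. nra. }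
  assert (A2 : t' * Rabs (b k - a k) <= d).
  { apply Rle_trans with (1 * dmax (length Y) b a). apply Rmult_le_compat; try lra; apply Rabs_pos. lra. }
  assert (A3 : Rabs (t' - t) * Rabs (a k - gmap a k) <= d * M).
  { apply Rmult_le_compat; try apply Rabs_pos; lra. }
  lra. Qed.

End Retract.

Lemma phi_exists (Y X : list point) (r : R) :
  incl X Y -> r_dense r X Y ->
  exists phi : nat -> nat, forall j, (j < length Y)%nat ->
    (phi j < length Y)%nat /\ dist (nth j Y []) (nth (phi j) Y []) < r /\ In (nth (phi j) Y []) X.
Proof. intros Hinc Hd.
  assert (Step : forall j, (j < length Y)%nat -> exists k,
    (k < length Y)%nat /\ dist (nth j Y []) (nth k Y []) < r /\ In (nth k Y []) X).
  { intros j Hj. destruct (Hd (nth j Y []) (nth_In _ _ Hj)) as [x [Hx Dx]].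
    destruct (In_nth Y x [] (Hinc _ Hx)) as [k [Hk E]]. exists k. subst x.
    rewrite dist_sym. auto. }
  assert (forall m, exists phi : nat -> nat, forall j, (j < m)%nat -> (j < length Y)%nat ->
    (phi j < length Y)%nat /\ dist (nth j Y []) (nth (phi j) Y []) < r /\ In (nth (phi j) Y []) X).
  { induction m.
    - exists (fun _ => O); intros; lia.
    - destruct IHm as [phi Hphi].
      destruct (Compare_dec.lt_dec m (length Y)) as [Lm|Lm].
      + destruct (Step m Lm) as [k Hk].
        exists (fun j => if Nat.eq_dec j m then k else phi j).
        intros j Hj Hj'. destruct (Nat.eq_dec j m); [subst; auto| apply Hphi; auto; lia].
      + exists phi. intros j Hj Hj'. apply Hphi; auto. lia. }
  destruct (H (length Y)) as [phi Hphi]. exists phi; intros; apply Hphi; auto.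
Qed.

Theorem corollary2 (n : nat) (X Y : list point) (r s s' : R) :
  Forall (fun p => length p = n) Y ->
  NoDup Y ->
  incl X Y ->
  0 < r ->
  r_dense r X Y ->
  consecutive_phase Y s s' ->
  2 * r < s' - s ->
  inclusion_homotopy_equiv (length Y)
    (VR_real Y (fun p => In p X) s)
    (VR_real Y (fun p => In p Y) s).
Proof.
  intros Hlen _ Hinc Hr0 Hd [_ [_ [_ Hph]]] Hr.
  destruct (phi_exists Y X r Hinc Hd) as [phi Hphi].
  assert (Hphi' : forall j, (j < length Y)%nat ->
    (phi j < length Y)%nat /\ dist (nth j Y []) (nth (phi j) Y []) < r).
  { intros j Hj; destruct (Hphi j Hj) as [? [? ?]]; auto. }
  assert (Hgap : forall j k, (j < length Y)%nat -> (k < length Y)%nat ->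
    dist (nth j Y []) (nth k Y []) < s' -> dist (nth j Y []) (nth k Y []) <= s).
  { intros j k Hj Hk Hlt.
    destruct (Rle_lt_dec (dist (nth j Y []) (nth k Y [])) s) as [?|Hgt]; auto.
    exfalso. apply (Hph (dist (nth j Y []) (nth k Y []))); [|lra].
    exists (nth j Y []), (nth k Y []). split; [apply nth_In; auto|split; [apply nth_In; auto|reflexivity]]. }
  assert (AB : forall a, VR_real Y (fun p => In p X) s a -> VR_real Y (fun p => In p Y) s a).
  { intros a [H1 [H2 [H3 [H4 H5]]]]. repeat split; auto; intros j Hj _; apply nth_In; auto. }
  split; [exact AB|].
  exists (gmap Y phi). split; [|split].
  - apply g_cont. intros a Ha.
    apply (VR_ext Y s _ (Hmap Y phi 0 a)).
    + apply (H_in Y n s s' r phi Hlen Hphi' Hgap Hr); auto; try lra.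
      intros j Hj; apply Hphi; auto.
    + intros j; unfold Hmap; ring.
  - apply H_homotopic. intros t a Ht Ha.
    apply (H_in Y n s s' r phi Hlen Hphi' Hgap Hr); auto.
    intros _ j Hj Hz. destruct Ha as [_ [_ [_ [H4 _]]]]. apply H4; auto.
    intros j Hj; apply Hphi; auto.
  - apply H_homotopic. intros t a Ht Ha.
    apply (H_in Y n s s' r phi Hlen Hphi' Hgap Hr); auto.
    intros _ j Hj _; apply nth_In; auto.
    intros j Hj; apply nth_In; apply Hphi; auto.
Qed.
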